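(* Let $(\mathbf H\oplus\mathbf V,\bullet)$ be the Lie group with product $(h,v)\bullet(h',v')=(h+h',\ \rho(h)v'+v)$, where $\rho:\mathbf H\to GL(\mathbf V)$ is a representation of the additive group $\mathbf H$. Let $\pi$ be a multiplicative Poisson bivector field on this group (i.e. a Poisson–Lie structure), and let $\pi^{ij}(h,v)$ denote its components with respect to linear coordinates $(h^k)$ on $\mathbf H$ and $(v^l)$ on $\mathbf V$. Then for every $k$, the bivector field with components $\partial\pi^{ij}/\partial h^k$ is left-invariant, and for every $l$, the bivector field with components $\partial\pi^{ij}/\partial v^l$ is right-invariant on the group.
   Context: $\mathbf H,\mathbf V$ are finite-dimensional real vector spaces, $\mathbf H$ regarded as a commutative group under addition. In these linear coordinates, for every $h'\in\mathbf H$ the constant vector field $(h',0)$ is left-invariant, and for every $v'\in\mathbf V$ the constant vector field $(0,v')$ is right-invariant. *)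

(* Defs.v *)
From HB Require Import structures.
From mathcomp Require Import all_boot all_order all_algebra.
From mathcomp Require Import all_classical all_reals all_analysis.
Set Implicit Arguments. Unset Strict Implicit. Unset Printing Implicit Defensive.
Import Order.TTheory GRing.Theory Num.Theory.
Import numFieldNormedType.Exports.
Local Open Scope ring_scope.

Section Defs.
Variable R : realType.

Fixpoint iter_dir (V W : normedModType R) (f : V -> W) (s : seq V) : V -> W :=
  if s is u :: s' then (fun x => derive (iter_dir f s') x u) else f.

Definition smooth (V W : normedModType R) (f : V -> W) : Prop :=
  forall (s : seq V) (x : V), differentiable (iter_dir f s) x.

Definition ebasis (N : nat) (j : 'I_N) : 'rV[R]_N := delta_mx ord0 j.

Definition pderiv (N : nat) (f : 'rV[R]_N -> R) (j : 'I_N) (x : 'rV[R]_N) : R :=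
  derive f x (ebasis j).

Definition jac (N : nat) (f : 'rV[R]_N -> 'rV[R]_N) (x : 'rV[R]_N) : 'M[R]_N :=
  \matrix_(i, j) (derive f x (ebasis j)) ord0 i.

Definition bivector_field (N : nat) (P : 'rV[R]_N -> 'M[R]_N) : Prop :=
  smooth P /\ forall x, (P x)^T = - P x.

(* Poisson: antisymmetric, smooth and [pi,pi] = 0 written in coordinates *)
Definition poisson (N : nat) (P : 'rV[R]_N -> 'M[R]_N) : Prop :=
  bivector_field P /\
  forall (x : 'rV[R]_N) (i j k : 'I_N),
    \sum_(l < N) (P x i l * pderiv (fun y => P y j k) l x
                + P x j l * pderiv (fun y => P y k i) l x
                + P x k l * pderiv (fun y => P y i j) l x) = 0.

Definition push (N : nat) (f : 'rV[R]_N -> 'rV[R]_N) (X : 'M[R]_N) (x : 'rV[R]_N)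
  : 'M[R]_N := jac f x *m X *m (jac f x)^T.

Definition representation (n m : nat) (rho : 'rV[R]_n -> 'M[R]_m) : Prop :=
  smooth rho /\ (forall h, rho h \in unitmx) /\ rho 0 = 1%:M /\
  forall h h', rho (h + h') = rho h *m rho h'.

(* the group H (+) V = R^(n+m), first n coordinates h, last m coordinates v:
   (h,v) . (h',v') = (h + h', rho(h) v' + v)   (rho(h) v' written on rows) *)
Definition gmul (n m : nat) (rho : 'rV[R]_n -> 'M[R]_m) (x y : 'rV[R]_(n + m))
  : 'rV[R]_(n + m) :=
  row_mx (lsubmx x + lsubmx y) (rsubmx y *m (rho (lsubmx x))^T + rsubmx x).

Definition left_invariant (n m : nat) (rho : 'rV[R]_n -> 'M[R]_m)
  (X : 'rV[R]_(n + m) -> 'M[R]_(n + m)) : Prop :=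
  forall g x, X (gmul rho g x) = push (gmul rho g) (X x) x.

Definition right_invariant (n m : nat) (rho : 'rV[R]_n -> 'M[R]_m)
  (X : 'rV[R]_(n + m) -> 'M[R]_(n + m)) : Prop :=
  forall g x, X (gmul rho x g) = push (gmul rho ^~ g) (X x) x.

Definition multiplicative (n m : nat) (rho : 'rV[R]_n -> 'M[R]_m)
  (P : 'rV[R]_(n + m) -> 'M[R]_(n + m)) : Prop :=
  forall g g', P (gmul rho g g') =
    push (gmul rho g) (P g') g' + push (gmul rho ^~ g') (P g) g.

Definition dbivector (N : nat) (P : 'rV[R]_N -> 'M[R]_N) (k : 'I_N)
  : 'rV[R]_N -> 'M[R]_N :=
  fun x => \matrix_(i, j) pderiv (fun y => P y i j) k x.

End Defs.

(* Main.v *)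
From Pilot Require Import Defs.
From HB Require Import structures.
From mathcomp Require Import all_boot all_order all_algebra.
From mathcomp Require Import all_classical all_reals all_analysis.
Local Open Scope ring_scope.
Import Order.TTheory GRing.Theory Num.Theory.
Import numFieldNormedType.Exports.
Import Pilot.Defs.

Section Helpers.
Variable R : realType.

Lemma derive_ext (V W : normedModType R) (f1 f2 : V -> W) (y1 y2 v : V) :
  (forall h : R, f1 (h *: v + y1) - f1 y1 = f2 (h *: v + y2) - f2 y2) ->
  derive f1 y1 v = derive f2 y2 v.
Proof.
move=> H; rewrite /derive.
have -> : (fun h : R => h^-1 *: ((f1 \o shift y1) (h *: v) - f1 y1)) =
  (fun h : R => h^-1 *: ((f2 \o shift y2) (h *: v) - f2 y2)).
  by apply/funext => h /=; rewrite H.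
by [].
Qed.

Lemma addKB (V : zmodType) (a b c : V) : (a + b) - (a + c) = b - c.
Proof. by rewrite opprD addrACA subrr add0r. Qed.

Lemma derive_bilin (V : normedModType R) (N : nat) (P : V -> 'M[R]_N)
  (J K C : 'M[R]_N) x v i j :
  derivable P x v ->
  derive (fun y => (J *m P y *m K + C) i j) x v = (J *m derive P x v *m K) i j.
Proof.
move=> dP.
have dE : forall a b, derivable (fun y => P y a b) x v by apply/derivable_mxP.
have -> : (fun y => (J *m P y *m K + C) i j) =
  \sum_(b < N) \sum_(a < N) ((J i a * K b j) \*: (fun y => P y a b)) + cst (C i j).
  apply/funext => y; rewrite !fct_sumE /= !mxE; congr (_ + _).
  apply: eq_bigr => b _; rewrite !mxE mulr_suml fct_sumE; apply: eq_bigr => a _.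
  by rewrite /= mulrAC.
rewrite deriveD; last 2 first.
- apply: derivable_sum => b; apply: derivable_sum => a; exact: derivableZ.
- exact: derivable_cst.
rewrite derive_cst addr0 derive_sum; last first.
  by move=> b; apply: derivable_sum => a; exact: derivableZ.
rewrite (derive_mx dP) !mxE; apply: eq_bigr => b _.
rewrite derive_sum; last by move=> a; exact: derivableZ.
rewrite !mxE mulr_suml; apply: eq_bigr => a _.
by rewrite deriveZ // !mxE /= mulrAC.
Qed.

End Helpers.

Theorem lemma3 (R : realType) (n m : nat) (rho : 'rV[R]_n -> 'M[R]_m)
  (P : 'rV[R]_(n + m) -> 'M[R]_(n + m)) :
  representation rho -> poisson P -> multiplicative rho P ->
  (forall k : 'I_n, left_invariant rho (dbivector P (lshift m k))) /\
  (forall l : 'I_m, right_invariant rho (dbivector P (rshift n l))).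
Proof.
move=> _ [[sP _] _] mult.
have dP : forall x v, derivable P x v.
  by move=> x v; apply: diff_derivable; exact: (sP [::] x).
have dbE : forall k x, dbivector P k x = derive P x (@ebasis R _ k).
  by move=> k x; rewrite (derive_mx (dP _ _)); apply/matrixP => i j; rewrite !mxE.
have shL : forall e a b, rsubmx e = 0 -> gmul rho a (e + b) = e + gmul rho a b.
  move=> e a b he; rewrite /gmul linearD /= [rsubmx (e + b)]linearD /= he add0r.
  rewrite -{2}(hsubmxK e) he add_row_mx add0r; congr row_mx.
  by rewrite addrCA.
have shR : forall e a b, lsubmx e = 0 -> gmul rho (e + a) b = e + gmul rho a b.
  move=> e a b he; rewrite /gmul [lsubmx (e + a)]linearD /= he add0r.
  rewrite [rsubmx (e + a)]linearD /=.
  rewrite -[X in _ = X + _](hsubmxK e) he add_row_mx add0r; congr row_mx.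
  by rewrite addrCA.
split.
- move=> k g x; set e := @ebasis R _ (lshift m k).
  have he : forall t : R, rsubmx (t *: e) = 0.
    move=> t; apply/matrixP => i j; rewrite !mxE /=.
    by rewrite eq_rlshift andbF mulr0.
  have shLe : forall (t : R) a b, gmul rho a (t *: e + b) = t *: e + gmul rho a b.
    by move=> t a b; exact: shL.
  set J := jac (gmul rho g) x.
  have hJ : forall t : R, jac (gmul rho g) (t *: e + x) = J.
    move=> t; rewrite /jac; apply: eq_mx => i j.
    rewrite (@derive_ext _ _ _ _ (gmul rho g) _ x) // => h.
    by rewrite addrCA !shLe addKB.
  have hC : forall t : R, jac (gmul rho ^~ (t *: e + x)) g = jac (gmul rho ^~ x) g.
    move=> t; rewrite /jac; apply: eq_mx => i j.
    rewrite (@derive_ext _ _ _ _ (gmul rho ^~ x) _ g) // => h /=.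
    by rewrite !shLe addKB.
  set C := push (gmul rho ^~ x) (P g) g.
  have hP : forall t : R, P (gmul rho g (t *: e + x)) = J *m P (t *: e + x) *m J^T + C.
    by move=> t; rewrite mult /push hJ hC.
  rewrite /push -/J [in RHS]dbE; apply/matrixP => i j.
  rewrite -(@derive_bilin R _ _ P J J^T C x e i j (dP x e)).
  rewrite mxE /pderiv -/e; apply: derive_ext => h.
  rewrite -shLe hP; have := hP 0; rewrite scale0r add0r => ->.
  by [].
- move=> l g x; set e := @ebasis R _ (rshift n l).
  have he : forall t : R, lsubmx (t *: e) = 0.
    move=> t; apply/matrixP => i j; rewrite !mxE /=.
    by rewrite eq_lrshift andbF mulr0.
  have shRe : forall (t : R) a b, gmul rho (t *: e + a) b = t *: e + gmul rho a b.
    by move=> t a b; exact: shR.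
  set J := jac (gmul rho ^~ g) x.
  have hJ : forall t : R, jac (gmul rho ^~ g) (t *: e + x) = J.
    move=> t; rewrite /jac; apply: eq_mx => i j.
    rewrite (@derive_ext _ _ _ _ (gmul rho ^~ g) _ x) // => h /=.
    by rewrite addrCA !shRe addKB.
  have hC : forall t : R, jac (gmul rho (t *: e + x)) g = jac (gmul rho x) g.
    move=> t; rewrite /jac; apply: eq_mx => i j.
    rewrite (@derive_ext _ _ _ _ (gmul rho x) _ g) // => h.
    by rewrite !shRe addKB.
  set C := push (gmul rho x) (P g) g.
  have hP : forall t : R, P (gmul rho (t *: e + x) g) = J *m P (t *: e + x) *m J^T + C.
    by move=> t; rewrite mult /push hJ hC [RHS]addrC.
  rewrite /push -/J [in RHS]dbE; apply/matrixP => i j.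
  rewrite -(@derive_bilin R _ _ P J J^T C x e i j (dP x e)).
  rewrite mxE /pderiv -/e; apply: derive_ext => h.
  rewrite -shRe hP; have := hP 0; rewrite scale0r add0r => ->.
  by [].
Qed.
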